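(* Let $G$ be a group which is the central product of normal subgroups $H$ and $K$ (so $G=HK$, $[H,K]=1$), and let $D$ be a divisible abelian group with trivial $G$-action. For any subgroup $B$ of $G$ contained in $H'\cap K'$ (such $B$ is central), the inflation homomorphism $\inf:\operatorname{H}^2(G/B,D)\to \operatorname{H}^2(G,D)$ is surjective.
   Context: $X'$ denotes the commutator subgroup of $X$; $\operatorname{H}^2(X,D)$ is second cohomology with trivial coefficients. *)

(* Defs.v *)
From HB Require Import structures.
From mathcomp Require Import all_boot all_fingroup all_algebra.

Set Implicit Arguments.
Unset Strict Implicit.
Unset Printing Implicit Defensive.

Import GRing.Theory.

Section GroupNotions.
Local Open Scope group_scope.
Variable G : groupType.

(* S is a subgroup of G (subsets are Prop-valued: G may be infinite). *)
Definition is_subgroup (S : G -> Prop) : Prop :=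
  [/\ S 1, (forall x y, S x -> S y -> S (x * y)) & (forall x, S x -> S x^-1)].

Definition is_normal (N : G -> Prop) : Prop :=
  is_subgroup N /\ (forall x g, N x -> N (x ^ g)).

Inductive gen_subgroup (S : G -> Prop) : G -> Prop :=
  | gen_in x : S x -> gen_subgroup S x
  | gen_one : gen_subgroup S 1
  | gen_mul x y : gen_subgroup S x -> gen_subgroup S y -> gen_subgroup S (x * y)
  | gen_inv x : gen_subgroup S x -> gen_subgroup S x^-1.

Definition commutator_subgroup (X Y : G -> Prop) : G -> Prop :=
  gen_subgroup (fun z => exists x y, [/\ X x, Y y & z = [~ x, y]]).

Definition derived_subgroup (X : G -> Prop) : G -> Prop := commutator_subgroup X X.

Definition is_central_product (H K : G -> Prop) : Prop :=
  [/\ is_normal H, is_normal K,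
      (forall g, exists h k, [/\ H h, K k & g = h * k]) &
      (forall z, commutator_subgroup H K z -> z = 1)].

(* pi : G -> Q is a surjective homomorphism with kernel N, i.e. Q
   (together with pi) is the quotient group G/N. *)
Definition is_quotient_map (N : G -> Prop) (Q : groupType) (pi : G -> Q) : Prop :=
  [/\ (forall x y, pi (x * y) = pi x * pi y),
      (forall q, exists x, pi x = q) &
      (forall x, pi x = 1 <-> N x)].
End GroupNotions.

Section Cohomology.
Local Open Scope ring_scope.

Definition divisible (D : zmodType) : Prop :=
  forall (d : D) (n : nat), (0 < n)%N -> exists e : D, e *+ n = d.

Definition is_2cocycle (X : groupType) (D : zmodType) (f : X -> X -> D) : Prop :=
  forall x y z : X,
    f y z - f (x * y)%g z + f x (y * z)%g - f x y = 0.

Definition coboundary (X : groupType) (D : zmodType) (c : X -> D) : X -> X -> D :=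
  fun x y => c y - c (x * y)%g + c x.

Definition cohomologous (X : groupType) (D : zmodType) (f g : X -> X -> D) : Prop :=
  exists c : X -> D, forall x y, f x y - g x y = coboundary c x y.

Definition inflation (G Q : groupType) (D : zmodType) (pi : G -> Q)
  (f : Q -> Q -> D) : G -> G -> D := fun x y => f (pi x) (pi y).

(* inf : H^2(Q, D) -> H^2(G, D) is surjective: every class of H^2(G,D)
   is the inflation of a class of H^2(Q,D). *)
Definition inflation_surjective (G Q : groupType) (D : zmodType) (pi : G -> Q) : Prop :=
  forall f : G -> G -> D, is_2cocycle f ->
    exists f' : Q -> Q -> D, is_2cocycle f' /\ cohomologous f (inflation pi f').
End Cohomology.

(* Main.v *)
Require Import Defs.
From HB Require Import structures.
From mathcomp Require Import all_boot all_fingroup all_algebra.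
From mathcomp Require Import all_order.
From mathcomp Require Import boolp.
From mathcomp Require classical_sets.
From mathcomp Require Import ring.
Set Implicit Arguments.
Unset Strict Implicit.
Unset Printing Implicit Defensive.
Import Order.TTheory GRing.Theory Num.Theory.
Local Open Scope ring_scope.

Section Inj.
Variables (A D : zmodType).
Hypothesis divD : forall (d : D) (n : nat), (0 < n)%N -> exists e : D, e *+ n = d.
Variables (S0 : A -> Prop) (r0 : A -> D).
Hypothesis S00 : S0 0.
Hypothesis S0B : forall x y, S0 x -> S0 y -> S0 (x - y).
Hypothesis r0B : forall x y, S0 x -> S0 y -> r0 (x - y) = r0 x - r0 y.

Definition Good (Y : A * D -> Prop) :=
  [/\ forall x d d', Y (x,d) -> Y (x,d') -> d = d',
      forall x d y d', Y (x,d) -> Y (y,d') -> Y (x - y, d - d') &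
      forall x, S0 x -> Y (x, r0 x)].

Section GoodY.
Variable Y : A * D -> Prop.
Hypothesis GY : Good Y.

Lemma Y00 : Y (0, 0).
Proof.
case: GY => _ HB HS; have := HB _ _ _ _ (HS _ S00) (HS _ S00).
by rewrite !subrr.
Qed.

Lemma YN x d : Y (x, d) -> Y (- x, - d).
Proof.
case: GY => _ HB _ H; have := HB _ _ _ _ Y00 H; by rewrite !sub0r.
Qed.

Lemma YD x d y d' : Y (x, d) -> Y (y, d') -> Y (x + y, d + d').
Proof.
case: GY => _ HB _ H H'; have := HB _ _ _ _ H (YN H'); by rewrite !opprK.
Qed.

Lemma Yn x d n : Y (x, d) -> Y (x *+ n, d *+ n).
Proof.
move=> H; elim: n => [|n IH]; first by rewrite !mulr0n; apply: Y00.
by rewrite !mulrS; apply: YD.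
Qed.

Lemma Yz x d k : Y (x, d) -> Y (x *~ k, d *~ k).
Proof.
move=> H; case: k => n; first by rewrite -!pmulrn; apply: Yn.
by rewrite NegzE !mulrNz; apply: YN; rewrite -!pmulrn; apply: Yn.
Qed.

Lemma Y0 d : Y (0, d) -> d = 0.
Proof. by case: GY => HF _ _ H; apply: HF H Y00. Qed.

Lemma ext_val a : exists e : D, forall k d, Y (a *~ k, d) -> d = e *~ k.
Proof.
case: (EM (exists n, (0 < n)%N /\ exists d, Y (a *+ n, d))) => [ex|nex].
  have ex' : exists n, `[< (0 < n)%N /\ exists d, Y (a *+ n, d) >].
    by case: ex => n Hn; exists n; apply/asboolP.
  case: (ex_minnP ex') => n /asboolP [n0 [dn Hdn]] nmin.
  have [e He] := divD dn n0.
  exists e => k d Hk.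
  set q := (k %/ n%:Z)%Z; set m := (k %% n%:Z)%Z.
  have m0 : 0 <= m by apply: modz_ge0; rewrite eqz_nat -lt0n.
  have mn : m < n%:Z by apply: ltz_pmod; rewrite ltz_nat.
  have km : k = n%:Z * q + m by rewrite mulrC /q /m -divz_eq.
  have [m' Em] : exists m' : nat, m = m'%:Z by exists `|m|%N; rewrite gez0_abs.
  have Hq := Yz q Hdn.
  have Hs : Y (a *~ k - (a *+ n) *~ q, d - dn *~ q) by case: GY => _ HB _; apply: HB.
  have E : a *~ k - (a *+ n) *~ q = a *+ m'.
    by rewrite km Em mulrzDr mulrzA -!pmulrn addrAC subrr add0r.
  rewrite E in Hs.
  case: m' Em E Hs => [|m'] Em E Hs.
    have /eqP := Y0 (Hs : Y (0, _)); rewrite subr_eq0 => /eqP ->.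
    by rewrite km Em addr0 mulrzA -pmulrn He.
  have := nmin m'.+1; rewrite asboolE => /(_ (conj erefl (ex_intro _ _ Hs))).
  by rewrite leqNgt -ltz_nat -Em mn.
exists 0 => k d Hk.
case: k Hk => [[|n]|n] Hk.
- by rewrite mulr0z; apply: Y0; rewrite mulr0z in Hk.
- by exfalso; apply: nex; exists n.+1; split => //; exists d; rewrite pmulrn.
- exfalso; apply: nex; exists n.+1; split => //; exists (- d).
  rewrite -[a *+ _]opprK; apply: YN.
  by rewrite NegzE mulrNz -pmulrn in Hk.
Qed.
End GoodY.

Lemma swapz (M : zmodType) (u v w z : M) : u + w = v + z -> u - v = z - w.
Proof.
move=> H; rewrite -[u](addrK w) H addrAC [v + z]addrC addrK //.
Qed.

Lemma swapz' (M : zmodType) (u v w z : M) : u - v = z - w -> u + w = v + z.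
Proof.
move=> H; rewrite -[u](subrK v) H addrAC subrK addrC //.
Qed.

Definition G0 (p : A * D) := S0 p.1 /\ p.2 = r0 p.1.
Definition Pz (X : A * D -> Prop) := Good (fun p => X p \/ G0 p).

Lemma Good_of_pairs (U : A * D -> Prop) :
  (forall x, S0 x -> U (x, r0 x)) ->
  (forall p q, U p -> U q -> exists W, [/\ Good W, W p, W q & forall t, W t -> U t]) ->
  Good U.
Proof.
move=> HS H; split => //.
- move=> x d d' Hd Hd'; have [W [[HF _ _] Wp Wq _]] := H _ _ Hd Hd'; exact: HF Wp Wq.
- move=> x d y d' Hd Hd'; have [W [[_ HB _] Wp Wq WU]] := H _ _ Hd Hd'.
  exact: WU (HB _ _ _ _ Wp Wq).
Qed.

Lemma GoodG0 : Good G0.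
Proof.
split.
- by move=> x d d' [_ /= ->] [_ /= ->].
- move=> x d y d' [Sx /= ->] [Sy /= ->]; split => /=; [exact: S0B | by rewrite r0B].
- by move=> x Sx; split.
Qed.

Lemma Good_addG0 W : Good W -> (forall x, S0 x -> W (x, r0 x)) ->
  Good (fun p => W p \/ G0 p).
Proof.
move=> GW HS.
have Wt t : W t \/ G0 t -> W t.
  by case=> //; case: t => x d [/= Sx ->]; exact: HS.
apply: Good_of_pairs => [x Sx|p q Hp Hq]; first by right.
by exists W; split => //; [apply: Wt | apply: Wt | left].
Qed.

Lemma chainP (F : (A * D -> Prop) -> Prop) :
  classical_sets.subset F Pz ->
  classical_sets.total_on F classical_sets.subset ->
  Pz (classical_sets.bigcup F id).
Proof.
move=> FP Ft; rewrite /Pz; apply: Good_of_pairs => [x Sx|p q Hp Hq]; first by right; split.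
have UG X : F X -> exists W, [/\ Good W, forall t, X t -> W t &
   forall t, W t -> classical_sets.bigcup F id t \/ G0 t].
  move=> FX; exists (fun p => X p \/ G0 p); split; first exact: FP.
    by move=> t Xt; left.
  by move=> t [Xt|Gt]; [left; exists X | right].
case: Hp => [[X1 FX1 Xp]|Gp]; case: Hq => [[X2 FX2 Xq]|Gq].
- case: (Ft _ _ FX1 FX2) => [S12|S21].
  + have [W [GW XW WU]] := UG _ FX2; exists W; split => //; apply: XW => //; exact: S12.
  + have [W [GW XW WU]] := UG _ FX1; exists W; split => //; apply: XW => //; exact: S21.
- have [W [GW XW WU]] := UG _ FX1; exists W; split => //; first exact: XW.
  by case: GW => _ _ HS; case: q Gq {WU} => x d [/= Sx ->]; apply: HS.
- have [W [GW XW WU]] := UG _ FX2; exists W; split => //; last exact: XW.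
  by case: GW => _ _ HS; case: p Gp {WU} => x d [/= Sx ->]; apply: HS.
- by exists G0; split => //; [exact: GoodG0 | move=> t; right].
Qed.

Lemma inj_ext : exists r : A -> D,
  (forall x y, r (x - y) = r x - r y) /\ (forall x, S0 x -> r x = r0 x).
Proof.
have [X [PX Xmax]] := classical_sets.Zorn_bigcup chainP.
set Y := fun p => X p \/ G0 p.
have GY : Good Y by [].
have tot a : exists d, Y (a, d).
  have [e He] := ext_val GY a.
  pose Z p := exists x d k, Y (x, d) /\ p = (x + a *~ k, d + e *~ k).
  have ZY t : Y t -> Z t.
    by case: t => x d Yt; exists x, d, 0; rewrite !mulr0z !addr0.
  have GZ : Good Z.
    split.
    - move=> x d d' [x1 [d1 [k1 [Y1 [E1 E2]]]]] [x2 [d2 [k2 [Y2 [E3 E4]]]]].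
      have H1 : x1 - x2 = a *~ k2 - a *~ k1 by apply: swapz; rewrite -E1 -E3.
      have H2 : Y (a *~ (k2 - k1), d1 - d2).
        by rewrite mulrzBr -H1; case: GY => _ HB _; apply: HB.
      have H3 := He _ _ H2; rewrite mulrzBr in H3.
      by rewrite E2 E4; apply: swapz'.
    - move=> x d y d' [x1 [d1 [k1 [Y1 [E1 E2]]]]] [x2 [d2 [k2 [Y2 [E3 E4]]]]].
      exists (x1 - x2), (d1 - d2), (k1 - k2); split.
        by case: GY => _ HB _; apply: HB.
      by rewrite E1 E2 E3 E4 !mulrzBr; congr pair; rewrite opprD addrACA.
    - by move=> x Sx; apply: ZY; right.
  have PZ : Pz Z by apply: Good_addG0 => // x Sx; apply: ZY; right.
  have XZ t : X t -> Z t by move=> Xt; apply: ZY; left.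
  have ZX : forall t, Z t -> X t.
    case: (EM (classical_sets.subset Z X)) => // nZX.
    by exfalso; apply: (Xmax Z) => //; split.
  exists e; left; apply: ZX; exists 0, 0, 1; split; first exact: (Y00 GY).
  by rewrite !add0r.
pose r a := projT1 (cid (tot a)).
have rP a : Y (a, r a) by rewrite /r; case: cid.
exists r; split.
- move=> x y; case: GY => HF HB _; apply: HF (rP _) (HB _ _ _ _ (rP x) (rP y)).
- move=> x Sx; case: GY => HF _ HS; apply: HF (rP _) (HS _ Sx).
Qed.
End Inj.

Lemma L4 (D : zmodType) (a b c d : D) : a - b + c - d = 0 -> a + c = d + b.
Proof. by move/eqP; rewrite subr_eq0 => /eqP H; rewrite -H addrAC subrK. Qed.

Record Hyps (G : groupType) (D : zmodType) (B : G -> Prop) (f : G -> G -> D) := {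
  hB1 : B 1%g;
  hBM : forall x y, B x -> B y -> B (x * y)%g;
  hBV : forall x, B x -> B x^-1%g;
  hBc : forall x y, B x -> B y -> (x * y = y * x)%g;
  hfs : forall x y, B x -> B y -> f x y = f y x;
  hfc : forall x y z, f y z - f (x * y)%g z + f x (y * z)%g - f x y = 0;
  hf1r : forall x, f x 1%g = 0;
  hf1l : forall x, f 1%g x = 0 }.

Section Tw.
Variables (G : groupType) (D : zmodType) (B : G -> Prop) (f : G -> G -> D).
Variable hh : Hyps B f.

Definition T (_ : Hyps B f) := {p : D * G | `[< B p.2 >]}.
HB.instance Definition _ := Choice.on (T hh).

Definition mk (d : D) (x : G) (Hx : B x) : T hh := exist _ (d, x) (introT (asboolP _) Hx).
Lemma inB (u : T hh) : B (val u).2.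
Proof. by case: u => [[d x]] /= /asboolP. Qed.

Definition tadd (u v : T hh) : T hh :=
  mk ((val u).1 + (val v).1 + f (val u).2 (val v).2) (hBM hh (inB u) (inB v)).
Definition topp (u : T hh) : T hh :=
  mk (- (val u).1 - f (val u).2 (val u).2^-1%g) (hBV hh (inB u)).
Definition tzero : T hh := mk 0 (hB1 hh).

Lemma taddA : associative tadd.
Proof.
move=> u v w; apply: val_inj => /=; congr pair; last by rewrite mulgA.
case: (sval u) (sval v) (sval w) => [a x] [b y] [c z] /=.
rewrite -!addrA; congr (_ + _); congr (_ + _); rewrite [RHS]addrCA; congr (_ + _).
exact: (L4 (hfc hh x y z)).
Qed.

Lemma taddC : commutative tadd.
Proof.
move=> u v; apply: val_inj => /=; congr pair; last by apply: (hBc hh); apply: inB.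
by rewrite (addrC (val u).1) (hfs hh) //; apply: inB.
Qed.

Lemma tadd0 : left_id tzero tadd.
Proof.
by move=> u; apply: val_inj => /=; rewrite add0r (hf1l hh) addr0 mul1g; case: (val u).
Qed.

Lemma taddN : left_inverse tzero topp tadd.
Proof.
move=> u; apply: val_inj => /=; rewrite mulVg; congr pair.
rewrite (hfs hh (hBV hh (inB u)) (inB u)).
by rewrite addrAC subrK addNr.
Qed.

HB.instance Definition _ := GRing.isZmodule.Build (T hh) taddA taddC tadd0 taddN.


Lemma psi_ex : (forall (d : D) (n : nat), (0 < n)%N -> exists e : D, e *+ n = d) ->
  exists psi : G -> D, forall b b', B b -> B b' -> f b b' = psi b + psi b' - psi (b * b')%g.
Proof.
move=> divD.
have h1 : (val (0 : T hh)).2 = 1%g by [].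
have h2 : forall u v : T hh, (val u).2 = 1%g -> (val v).2 = 1%g -> (val (u - v)).2 = 1%g.
  by move=> u v /= Hu Hv; rewrite Hu Hv invg1 mulg1.
have h3 : forall u v : T hh, (val u).2 = 1%g -> (val v).2 = 1%g ->
    (val (u - v)).1 = (val u).1 - (val v).1.
  by move=> u v /= Hu Hv; rewrite Hu Hv invg1 !(hf1l hh) subr0 addr0.
have [r [rB rS]] := @inj_ext (T hh) D divD (fun u => (val u).2 = 1%g) (fun u => (val u).1) h1 h2 h3.
have r0 : r 0 = 0 by have := rB 0 0; rewrite !subrr.
have rN v : r (- v) = - r v by have := rB 0 v; rewrite sub0r r0 sub0r.
have rD u v : r (u + v) = r u + r v by have := rB u (- v); rewrite opprK rN opprK.
pose psi x := if pselect (B x) is left Hx then r (mk 0 Hx) else 0.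
exists psi => b b' Hb Hb'.
rewrite /psi; case: pselect => // Hb1; case: pselect => // Hb2.
case: pselect => [Hb3|]; last by have := hBM hh Hb Hb'.
have key : mk 0 Hb1 + mk 0 Hb2 = mk (f b b') (hB1 hh) + mk 0 Hb3.
  by apply: val_inj => /=; rewrite !add0r (hf1l hh) !addr0 mul1g.
by rewrite -rD key rD rS // addrK.
Qed.
End Tw.

Section SZ.
Variable M : zmodType.
Definition SZ := (int * M)%type.
HB.instance Definition _ := GRing.Zmodule.on SZ.
Definition szone : SZ := (1, 0).
Definition szmul (u v : SZ) : SZ := (u.1 * v.1, u.2 *~ v.1 + v.2 *~ u.1).
Lemma szA : associative szmul.
Proof.
move=> [n a] [m b] [k c]; rewrite /szmul /=; congr pair; first by rewrite mulrA.
rewrite !mulrzDl -!mulrzA (mulrC k n) (mulrC m n) addrA //.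
Qed.
Lemma szC : commutative szmul.
Proof. by move=> [n a] [m b]; rewrite /szmul /= mulrC addrC. Qed.
Lemma sz1 : left_id szone szmul.
Proof. by move=> [n a]; rewrite /szmul /= mul1r mul0rz add0r. Qed.
Lemma szD : left_distributive szmul +%R.
Proof.
move=> [n a] [m b] [k c]; rewrite /szmul /=; congr pair; first by rewrite mulrDl.
by rewrite mulrzDl mulrzDr addrACA.
Qed.
Lemma sz10 : szone != 0.
Proof. by []. Qed.
HB.instance Definition _ := GRing.Zmodule_isComNzRing.Build SZ szA szC sz1 szD sz10.
Definition iota (a : M) : SZ := (0, a).
Lemma iota_morph : {morph iota : x y / x - y}.
Proof. by move=> x y; rewrite /iota; congr pair; rewrite subrr. Qed.
HB.instance Definition _ := GRing.isZmodMorphism.Build M SZ iota iota_morph.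
Lemma iota_inj : injective iota.
Proof. by move=> x y []. Qed.
End SZ.

Ltac zring := apply: (@iota_inj _); ring.

Lemma zs1 (M : zmodType) (l r e : M) (k : int) : e = 0 -> l - r = e *~ k -> l = r.
Proof. by move=> ->; rewrite mul0rz => /eqP; rewrite subr_eq0 => /eqP. Qed.
Lemma zs2 (M : zmodType) (l r e1 e2 : M) (k1 k2 : int) :
  e1 = 0 -> e2 = 0 -> l - r = e1 *~ k1 + e2 *~ k2 -> l = r.
Proof. by move=> -> ->; rewrite !mul0rz addr0 => /eqP; rewrite subr_eq0 => /eqP. Qed.
Lemma zs3 (M : zmodType) (l r e1 e2 e3 : M) (k1 k2 k3 : int) :
  e1 = 0 -> e2 = 0 -> e3 = 0 -> l - r = e1 *~ k1 + e2 *~ k2 + e3 *~ k3 -> l = r.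
Proof. by move=> -> -> ->; rewrite !mul0rz !addr0 => /eqP; rewrite subr_eq0 => /eqP. Qed.

Section Grp.
Variables (G : groupType) (D : zmodType) (f : G -> G -> D).
Hypothesis fc : is_2cocycle f.
Hypothesis f1r : forall x, f x 1%g = 0.
Hypothesis f1l : forall x, f 1%g x = 0.
Definition gam x y := f x y - f y x.

Lemma gam_mul x1 x2 y : commute x1 y -> commute x2 y ->
  gam (x1 * x2)%g y = gam x1 y + gam x2 y.
Proof.
move=> c1 c2.
have e1 := fc x1 x2 y; have e2 := fc x1 y x2; have e3 := fc y x1 x2.
rewrite c2 in e1; rewrite c1 in e2.
apply: (zs3 (k1 := -1) (k2 := 1) (k3 := -1) e1 e2 e3); rewrite /gam; apply: (@iota_inj _); ring.
Qed.

Lemma gam1 y : gam 1%g y = 0.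
Proof. by rewrite /gam f1l f1r subr0. Qed.

Lemma gamN x y : gam y x = - gam x y.
Proof. by rewrite /gam opprB. Qed.

Lemma commV (x y : G) : commute x y -> commute (x^-1)%g y.
Proof. by move=> c; apply: commute_sym; apply: commuteV; apply: commute_sym. Qed.

Lemma commMl (x z y : G) : commute x y -> commute z y -> commute (x * z)%g y.
Proof. by move=> c1 c2; apply: commute_sym; apply: commuteM; apply: commute_sym. Qed.

Lemma gam_inv x y : commute x y -> gam (x^-1)%g y = - gam x y.
Proof.
move=> c; have := gam_mul c (commV c); rewrite mulgV gam1 => /esym /eqP.
by rewrite addr_eq0 => /eqP ->; rewrite opprK.
Qed.

Lemma der_gam (X Y : G -> Prop) : is_subgroup X ->
  (forall x y, X x -> Y y -> commute x y) ->
  forall z, derived_subgroup X z -> X z /\ forall y, Y y -> gam z y = 0.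
Proof.
move=> [X1 XM XV] cXY z; elim => {z}.
- move=> z [x [w [Xx Xw ->]]].
  rewrite /commg /conjg; split.
    exact: XM _ _ (XV _ Xx) (XM _ _ (XV _ Xw) (XM _ _ Xx Xw)).
  move=> y Yy; have cx := cXY _ _ Xx Yy; have cw := cXY _ _ Xw Yy.
  rewrite gam_mul; last first.
  + by apply: commMl; [apply: commV | apply: commMl].
  + by apply: commV.
  rewrite gam_mul; last first.
  + by apply: commMl.
  + by apply: commV.
  rewrite gam_mul // !gam_inv //; zring.
- by split => // y _; apply: gam1.
- move=> x w _ [Xx gx] _ [Xw gw]; split; first by apply: XM.
  by move=> y Yy; rewrite gam_mul ?gx ?gw ?addr0 //; apply: cXY.
- move=> x _ [Xx gx]; split; first by apply: XV.
  by move=> y Yy; rewrite gam_inv ?gx ?oppr0 //; apply: cXY.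
Qed.
End Grp.

Section Main.
Variables (G : groupType) (H K B : G -> Prop) (D : zmodType)
  (Q : groupType) (pi : G -> Q).
Hypothesis hcp : is_central_product H K.
Hypothesis divD : divisible D.
Hypothesis hB : is_subgroup B.
Hypothesis hBHK : forall b, B b -> derived_subgroup H b /\ derived_subgroup K b.
Hypothesis hpi : is_quotient_map B pi.
Variable f : G -> G -> D.
Hypothesis fc : is_2cocycle f.
Hypothesis f1r : forall x, f x 1%g = 0.
Hypothesis f1l : forall x, f 1%g x = 0.

Lemma cHK h k : H h -> K k -> commute h k.
Proof.
case: hcp => _ _ _ cm Hh Kk; apply/commgP/eqP; apply: cm.
by apply: gen_in; exists h, k; split.
Qed.

Lemma subH : is_subgroup H. Proof. by case: hcp => -[]. Qed.
Lemma subK : is_subgroup K. Proof. by case: hcp => _ []. Qed.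

Lemma BderK b : B b -> K b /\ forall y, H y -> gam f b y = 0.
Proof.
move=> Bb; apply: (der_gam fc f1r f1l subK) (hBHK Bb).2.
by move=> x y Kx Hy; apply: commute_sym; apply: cHK.
Qed.

Lemma BderH b : B b -> H b /\ forall y, K y -> gam f b y = 0.
Proof.
move=> Bb; apply: (der_gam fc f1r f1l subH) (hBHK Bb).1; exact: cHK.
Qed.

Lemma Bcent b g : B b -> commute b g.
Proof.
move=> Bb; case: hcp => _ _ HK _; have [h [k [Hh Kk ->]]] := HK g.
have [Kb _] := BderK Bb; have [Hb _] := BderH Bb.
apply: commuteM; first by apply: commute_sym; apply: cHK.
exact: cHK.
Qed.

Lemma Bsym b g : B b -> f b g = f g b.
Proof.
move=> Bb; apply/eqP; rewrite -subr_eq0; apply/eqP; rewrite -/(gam f b g).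
case: hcp => _ _ HK _; have [h [k [Hh Kk ->]]] := HK g.
have [Kb gK] := BderK Bb; have [Hb gH] := BderH Bb.
have ch : commute h b := commute_sym (@Bcent b h Bb).
have ck : commute k b := commute_sym (@Bcent b k Bb).
rewrite (gamN f) (gam_mul fc ch ck) (gamN f b h) (gamN f b k) (gK h Hh) (gH k Kk).
by rewrite !oppr0 addr0 oppr0.
Qed.

Definition hh0 : Hyps B f.
Proof.
case: hB => B1 BM BV.
apply: (@Build_Hyps G D B f B1 BM BV) => //.
- by move=> x y Bx _; apply: Bcent.
- by move=> x y Bx _; apply: Bsym.
Defined.

Lemma main_norm : exists (f' : Q -> Q -> D) (c : G -> D), is_2cocycle f' /\
  forall x y, f x y - f' (pi x) (pi y) = coboundary c x y.
Proof.
have [psi psiP] := psi_ex hh0 divD.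
case: hpi => piM piS piK.
have pi1 : pi 1%g = 1%g by apply/piK; case: hB.
have piV x : pi (x^-1)%g = ((pi x)^-1)%g.
  by apply/esym/mulg1_eq; rewrite -piM mulgV.
pose s q := if q == 1%g then 1%g else projT1 (cid (piS q)).
have spi q : pi (s q) = q.
  by rewrite /s; case: eqP => [->|_] //; case: cid.
have s1 : s 1%g = 1%g by rewrite /s eqxx.
have Bpi x y : pi x = pi y -> B (x^-1 * y)%g.
  by move=> E; apply/piK; rewrite piM piV E mulVg.
pose bx x := ((s (pi x))^-1 * x)%g.
have Bbx x : B (bx x) by apply: Bpi; rewrite spi.
pose c x := psi (bx x) - f (s (pi x)) (bx x).
have cB b : B b -> c b = psi b.
  move=> Bb; have pb : pi b = 1%g by apply/piK.
  by rewrite /c /bx pb s1 invg1 mul1g f1l subr0.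
have Lc y b : B b -> c (y * b)%g = c y + c b - f y b.
  move=> Bb; have pb : pi b = 1%g by apply/piK.
  have pyb : pi (y * b)%g = pi y by rewrite piM pb mulg1.
  rewrite (cB _ Bb) /c /bx pyb.
  set t := s (pi y); set u := (t^-1 * y)%g.
  have yE : y = (t * u)%g by rewrite /u mulKVg.
  rewrite mulgA -/u [in f y b]yE.
  have ep := psiP u b (Bbx y) Bb.
  have ec := fc t u b; rewrite ep in ec.
  apply: (zs1 (k := -1) ec); zring.
pose hh x y := f x y - coboundary c x y.
have hR x y b : B b -> hh x (y * b)%g = hh x y.
  move=> Bb; rewrite /hh /coboundary mulgA (Lc y b Bb) (Lc (x * y)%g b Bb).
  apply: (zs1 (k := 1) (fc x y b)); zring.
have hL x y b : B b -> hh (x * b)%g y = hh x y.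
  move=> Bb; have xby : (x * b * y = x * y * b)%g.
    by rewrite -mulgA (@Bcent b y Bb) mulgA.
  rewrite /hh /coboundary xby (Lc x b Bb) (Lc (x * y)%g b Bb).
  have e1 := fc x b y; rewrite (@Bcent b y Bb) (@Bsym b y Bb) in e1.
  apply: (zs2 (k1 := -1) (k2 := 1) e1 (fc x y b)); zring.
have hInv x x' y y' : pi x = pi x' -> pi y = pi y' -> hh x y = hh x' y'.
  move=> ex ey.
  have Ex : x' = (x * (x^-1 * x'))%g by rewrite mulKVg.
  have Ey : y' = (y * (y^-1 * y'))%g by rewrite mulKVg.
  rewrite Ex Ey hL ?hR //; exact: Bpi.
pose f' q1 q2 := hh (s q1) (s q2).
exists f', c; split.
  move=> q1 q2 q3; rewrite /f'.
  rewrite (hInv (s (q1 * q2)%g) (s q1 * s q2)%g (s q3) (s q3)); last first.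
  - by [].
  - by rewrite piM !spi.
  rewrite (hInv (s q1) (s q1) (s (q2 * q3)%g) (s q2 * s q3)%g); last first.
  - by rewrite piM !spi.
  - by [].
  rewrite /hh /coboundary !mulgA.
  apply: (zs1 (k := 1) (fc (s q1) (s q2) (s q3))); zring.
move=> x y; rewrite /f' (hInv (s (pi x)) x (s (pi y)) y) ?spi //.
rewrite /hh; zring.
Qed.
End Main.

Theorem theorem3p1 (G : groupType) (H K B : G -> Prop) (D : zmodType)
  (Q : groupType) (pi : G -> Q) :
  is_central_product H K ->
  divisible D ->
  is_subgroup B ->
  (forall b, B b -> derived_subgroup H b /\ derived_subgroup K b) ->
  is_quotient_map B pi ->
  inflation_surjective D pi.
Proof.
move=> hcp divD hB hBHK hpi f fc.
pose k := f 1%g 1%g.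
pose f0 x y := f x y - k.
have f0c : is_2cocycle f0.
  move=> x y z; rewrite /f0; apply: (zs1 (k := 1) (fc x y z)); zring.
have f0l x : f0 1%g x = 0.
  have := fc 1%g 1%g x; rewrite !mul1g => e.
  by rewrite /f0; apply: (zs1 (k := 1) e); zring.
have f0r x : f0 x 1%g = 0.
  have := fc x 1%g 1%g; rewrite !mul1g mulg1 => e.
  by rewrite /f0; apply: (zs1 (k := -1) e); zring.
have [f' [c [f'c Hc]]] := main_norm hcp divD hB hBHK hpi f0c f0r f0l.
exists f'; split => //; exists (fun x => c x + k) => x y.
rewrite /inflation /coboundary.
have e : (f0 x y - f' (pi x) (pi y)) - coboundary c x y = 0 by rewrite Hc subrr.
rewrite /coboundary /f0 in e.
apply: (zs1 (k := 1) e); zring.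
Qed.
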